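(* For $z=x+iy$ with $x>1$ and $y\in\mathbb{R}$, \[|\zeta(z)|^2=\zeta(2x)\sum_{m=1}^{\infty}\frac{2^{\omega(m)}}{m^{x}}\prod_{p\mid m}\cos\big(y\ln p^{v_p(m)}\big).\]
   Context: $\zeta(s)=\sum_{n\ge1}n^{-s}$ for $\Re(s)>1$; $\omega(m)$ is the number of distinct prime divisors of $m$; $v_p(m)$ is the exponent of the prime $p$ in $m$; the product is over the primes dividing $m$ (empty product $=1$). *)

(* Defs.v *)
From Stdlib Require Import Reals.
From mathcomp Require Import ssreflect ssrbool ssrnat seq prime.
From Stdlib Require Import List.

Open Scope R_scope.

Definition omega (m : nat) : nat := size (primes m).

Definition cos_prod (y : R) (m : nat) : R :=
  List.fold_right Rmult 1
    (List.map (fun p : nat => cos (y * ln (INR (expn p (logn p m))))) (primes m)).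

(* n^{-(x+iy)} = n^{-x} (cos (y ln n) - i sin (y ln n)) *)
Definition zeta_re_term (x y : R) (n : nat) : R :=
  Rpower (INR n) (- x) * cos (y * ln (INR n)).
Definition zeta_im_term (x y : R) (n : nat) : R :=
  - (Rpower (INR n) (- x) * sin (y * ln (INR n))).

Definition zeta_real_term (s : R) (n : nat) : R := Rpower (INR n) (- s).

Definition rhs_term (x y : R) (m : nat) : R :=
  pow 2 (omega m) / Rpower (INR m) x * cos_prod y m.

(* Main.v *)
Require Import Defs.
From HB Require Import structures.
From Stdlib Require Import Reals Lra Lia.
From mathcomp Require Import ssreflect ssrbool ssrfun eqtype ssrnat seq div choice fintype path bigop prime.
Open Scope R_scope.

Lemma Rmult_0_l' : left_zero 0 Rmult. Proof. move=> x; ring. Qed.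
Lemma Rplus_A : associative Rplus. Proof. move=> *; ring. Qed.
Lemma Rmult_A : associative Rmult. Proof. move=> *; ring. Qed.
Lemma Rmult_0_r' : right_zero 0 Rmult. Proof. move=> x; ring. Qed.
HB.instance Definition _ := Monoid.isComLaw.Build R 0 Rplus Rplus_A Rplus_comm Rplus_0_l.
HB.instance Definition _ := Monoid.isComLaw.Build R 1 Rmult Rmult_A Rmult_comm Rmult_1_l.
HB.instance Definition _ := Monoid.isMulLaw.Build R 0 Rmult Rmult_0_l' Rmult_0_r'.
HB.instance Definition _ := Monoid.isAddLaw.Build R Rmult Rplus Rmult_plus_distr_r Rmult_plus_distr_l.

Notation "\rsum_ ( i <- s ) F" := (\big[Rplus/0]_(i <- s) F) (at level 41, F at level 41, i, s at level 50).

Lemma rsum_distrl {I} (s : seq I) a F : (\rsum_(i <- s) F i) * a = \rsum_(i <- s) (F i * a).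
Proof. elim: s => [|b s IH]; rewrite ?big_nil ?big_cons; [ring| rewrite -IH; ring]. Qed.

Lemma rsum_le {I : eqType} (s : seq I) F G : (forall i, i \in s -> F i <= G i) ->
  \rsum_(i <- s) F i <= \rsum_(i <- s) G i.
Proof.
elim: s => [|a s IH] H; first by rewrite !big_nil; lra.
rewrite !big_cons; apply: Rplus_le_compat; first by apply: H; rewrite inE eqxx.
by apply: IH => i Hi; apply: H; rewrite inE Hi orbT.
Qed.

Local Open Scope nat_scope.
Fixpoint UDPl (L : seq nat) : seq (nat * nat) :=
  match L with
  | [::] => [:: (1, 1)]
  | q :: L' => [seq (q * r.1, r.2) | r <- UDPl L'] ++ [seq (r.1, q * r.2) | r <- UDPl L']
  end.

Lemma UDP_spec (P : seq nat) (m : nat) : uniq P -> 0 < m -> primes m =i P ->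
  uniq (UDPl [seq p ^ logn p m | p <- P]) /\
  forall d e, ((d, e) \in UDPl [seq p ^ logn p m | p <- P]) = (d * e == m) && coprime d e.
Proof.
elim: P m => [|p P' IH] m uP m0 Hpr.
  have m1 : m = 1.
    case: (ltngtP m 1) => // m1; first by rewrite ltnS leqn0 in m1; rewrite (eqP m1) in m0.
    have := Hpr (pdiv m); rewrite in_nil mem_primes pdiv_prime // m0 pdiv_dvd //.
  move: {Hpr m0} m1 => ->; split => // d e; rewrite inE xpair_eqE muln_eq1.
  by case: (d == 1) / eqP => [->|]; case: (e == 1) / eqP => [->|] //=; rewrite andbF.
have /andP [pP' uP'] := uP.
have pm : p \in primes m by rewrite Hpr inE eqxx.
move: (pm); rewrite mem_primes => /and3P [pr _ pdm].
set v := logn p m.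
have v0 : 0 < v by rewrite /v logn_gt0.
have pv0 : 0 < p ^ v by rewrite expn_gt0 prime_gt0.
set m' := m %/ p ^ v.
have Hm : m = p ^ v * m' by rewrite /m' mulnC divnK // pfactor_dvdnn.
have m'0 : 0 < m' by move: m0; rewrite Hm muln_gt0 => /andP [].
have Hlog : forall q, logn q m = v * (q == p) + logn q m'.
  by move=> q; rewrite {1}Hm lognM // lognX logn_prime.
have lp0 : logn p m' = 0.
  by move: (Hlog p); rewrite eqxx muln1 -/v => /eqP; rewrite -{1}(addn0 v) eqn_add2l => /eqP.
have npm' : ~~ (p %| m').
  apply/negP => H; have : p \in primes m' by rewrite mem_primes pr m'0 H.
  by rewrite -logn_gt0 lp0.
have Hpr' : primes m' =i P'.
  move=> q; case: (q =P p) => [->|qp].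
    by rewrite -logn_gt0 lp0 (negbTE pP').
  have := Hpr q; rewrite -!logn_gt0 Hlog inE.
  by move/eqP/negbTE: qp => -> /=; rewrite muln0 add0n.
have Hmap : [seq q ^ logn q m | q <- p :: P'] = p ^ v :: [seq q ^ logn q m' | q <- P'].
  rewrite /= -/v; congr (_ :: _); apply/eq_in_map => q qP.
  rewrite Hlog; have -> : (q == p) = false by apply/eqP => E; rewrite -E qP in pP'.
  by rewrite muln0 add0n.
rewrite Hmap /=.
have [uS memS] := IH m' uP' m'0 Hpr'.
set S := UDPl _ in uS memS *.
have Sprop : forall r, r \in S -> [/\ r.1 * r.2 = m', coprime r.1 r.2, ~~ (p %| r.1) & ~~ (p %| r.2)].
  move=> [r1 r2]; rewrite memS => /andP [/eqP E C]; split => //=.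
    by apply/negP => H; move/negP: npm'; apply; rewrite -E dvdn_mulr.
  by apply/negP => H; move/negP: npm'; apply; rewrite -E dvdn_mull.
have cpv : forall a, ~~ (p %| a) -> coprime (p ^ v) a.
  by move=> a H; apply: coprimeXl; rewrite prime_coprime.
split.
  rewrite cat_uniq !map_inj_in_uniq //.
  - rewrite uS /= andbT; apply/hasPn => [[a b]] /mapP [r rS [-> ->]].
    apply/mapP => [[r' r'S [E _]]].
    have [_ _ H _] := Sprop _ rS; move/negP: H; apply; rewrite E.
    by apply: dvdn_mulr; exact: dvdn_exp.
  - by move=> [a b] [a' b'] _ _ /= [-> /eqP]; rewrite eqn_pmul2l // => /eqP ->.
  - by move=> [a b] [a' b'] _ _ /= [/eqP]; rewrite eqn_pmul2l // => /eqP -> ->.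
move=> d e; apply/idP/idP.
  rewrite mem_cat => /orP [] /mapP [r rS [-> ->]]; have [E C n1 n2] := Sprop _ rS.
    by rewrite -mulnA E -Hm eqxx coprimeMl C cpv.
  by rewrite mulnCA E -Hm eqxx coprimeMr C coprime_sym cpv.
move=> /andP [/eqP E C].
have d0 : 0 < d by move: m0; rewrite -E muln_gt0 => /andP [].
have e0 : 0 < e by move: m0; rewrite -E muln_gt0 => /andP [].
have : p %| d * e by rewrite E.
rewrite Euclid_dvdM // => /orP [pd|pe].
  have cpe : coprime p e by apply: coprime_dvdl pd C.
  have le0 : logn p e = 0 by apply: logn_coprime.
  have ld : logn p d = v by rewrite /v -E lognM // le0 addn0.
  have dvd : p ^ v %| d by rewrite -ld pfactor_dvdnn.
  set d' := d %/ p ^ v.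
  have Hd : d = p ^ v * d' by rewrite /d' mulnC divnK.
  rewrite mem_cat; apply/orP; left; apply/mapP; exists (d', e); last by rewrite /= -Hd.
  rewrite memS; apply/andP; split.
    by rewrite -(@eqn_pmul2l _ _ _ pv0) mulnA -Hd E Hm.
  by apply: (@coprime_dvdl _ d e _ C); rewrite {1}Hd dvdn_mull.
have cpd : coprime p d by apply: (coprime_dvdl pe); rewrite coprime_sym.
have le0 : logn p d = 0 by apply: logn_coprime.
have ld : logn p e = v by rewrite /v -E lognM // le0.
have dvd : p ^ v %| e by rewrite -ld pfactor_dvdnn.
set e' := e %/ p ^ v.
have He : e = p ^ v * e' by rewrite /e' mulnC divnK.
rewrite mem_cat; apply/orP; right; apply/mapP; exists (d, e'); last by rewrite /= -He.
rewrite memS; apply/andP; split.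
  by rewrite -(@eqn_pmul2l _ _ _ pv0) mulnCA -He E Hm.
by rewrite coprime_sym; apply: (@coprime_dvdl _ e d); [rewrite {1}He dvdn_mull | rewrite coprime_sym].
Qed.
Local Open Scope R_scope.

Lemma UDPl_pos (L : seq nat) : all (fun q => 0 < q)%N L ->
  forall r, r \in UDPl L -> (0 < r.1)%N /\ (0 < r.2)%N.
Proof.
elim: L => [|q L IH] /=; first by move=> _ r; rewrite inE => /eqP ->.
move=> /andP [q0 aL] r; rewrite mem_cat => /orP [] /mapP [r' r'S ->] /=;
  have [h1 h2] := IH aL r' r'S; rewrite ?muln_gt0 ?q0 ?h1 ?h2; done.
Qed.

Lemma ln_INR_mul (a b : nat) : (0 < a)%N -> (0 < b)%N ->
  ln (INR (a * b)) = ln (INR a) + ln (INR b).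
Proof.
move=> a0 b0; rewrite mult_INR ln_mult //; apply: lt_0_INR; apply/ltP => //.
Qed.

Lemma UDP_trig (L : seq nat) (y : R) : all (fun q => 0 < q)%N L -> forall phi : R,
  \rsum_(r <- UDPl L) cos (phi + y * ln (INR r.1) - y * ln (INR r.2)) =
  2 ^ (size L) * List.fold_right Rmult 1 (map (fun q => cos (y * ln (INR q))) L) * cos phi.
Proof.
elim: L => [|q L IH] /=.
  move=> _ phi; rewrite big_cons big_nil /= ln_1; have -> : phi + y * 0 - y * 0 = phi by ring. ring.
move=> /andP [q0 aL] phi; rewrite big_cat !big_map /=.
have Hpos := @UDPl_pos L aL.
rewrite (eq_big_seq (fun r : nat * nat => cos ((phi + y * ln (INR q)) + y * ln (INR r.1) - y * ln (INR r.2)))); last first.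
  by move=> r rS /=; have [h1 h2] := Hpos r rS; rewrite ln_INR_mul //; f_equal; ring.
rewrite [X in _ + X](eq_big_seq (fun r : nat * nat => cos ((phi - y * ln (INR q)) + y * ln (INR r.1) - y * ln (INR r.2)))); last first.
  by move=> r rS /=; have [h1 h2] := Hpos r rS; rewrite ln_INR_mul //; f_equal; ring.
rewrite !IH // cos_plus cos_minus; ring.
Qed.

Lemma rsum_distrr {I} (s : seq I) a F : a * (\rsum_(i <- s) F i) = \rsum_(i <- s) (a * F i).
Proof. elim: s => [|b s IH]; rewrite ?big_nil ?big_cons; [ring| rewrite -IH; ring]. Qed.

Lemma rsum_add {I} (s : seq I) F G : \rsum_(i <- s) (F i + G i) = (\rsum_(i <- s) F i) + (\rsum_(i <- s) G i).
Proof. elim: s => [|b s IH]; rewrite ?big_nil ?big_cons; [ring| rewrite IH; ring]. Qed.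

Lemma rsum_mul {I J} (s : seq I) (t : seq J) F G :
  (\rsum_(i <- s) F i) * (\rsum_(j <- t) G j) = \rsum_(i <- s) \rsum_(j <- t) (F i * G j).
Proof. rewrite rsum_distrl; apply: eq_bigr => i _; exact: rsum_distrr. Qed.

Lemma rsum_ge0 {I : eqType} (s : seq I) F : (forall i, i \in s -> 0 <= F i) -> 0 <= \rsum_(i <- s) F i.
Proof. move=> H; have := @rsum_le _ s (fun _ => 0) F H; rewrite big1_eq; done. Qed.

Lemma rsum_abs {I} (s : seq I) F : Rabs (\rsum_(i <- s) F i) <= \rsum_(i <- s) Rabs (F i).
Proof.
elim: s => [|b s IH]; rewrite ?big_nil ?big_cons; first by rewrite Rabs_R0; lra.
apply: Rle_trans (Rabs_triang _ _) _; lra.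
Qed.

Lemma rsum_partition {I : eqType} (s : seq I) (f : I -> nat) (t : seq nat) F :
  uniq t -> (forall i, i \in s -> f i \in t) ->
  \rsum_(i <- s) F i = \rsum_(j <- t) \big[Rplus/0]_(i <- s | f i == j) F i.
Proof.
move=> ut Hf.
rewrite (eq_bigr (fun j => \rsum_(i <- s) (if f i == j then F i else 0))); last first.
  by move=> j _; rewrite big_mkcond.
rewrite exchange_big; apply: eq_big_seq => i iS.
rewrite (bigD1_seq (f i)) ?Hf // eqxx big1 /=; first ring.
by move=> j /negbTE; rewrite eq_sym => ->.
Qed.

Lemma split_sub {I : eqType} (s1 s2 : seq I) F : uniq s1 -> uniq s2 -> {subset s1 <= s2} ->
  \rsum_(i <- s2) F i = \rsum_(i <- s1) F i + \big[Rplus/0]_(i <- s2 | i \notin s1) F i.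
Proof.
move=> u1 u2 sub; rewrite (bigID (fun i => i \in s1)) /=; congr (_ + _).
rewrite -big_filter; apply: perm_big; apply: uniq_perm; rewrite ?filter_uniq //.
by move=> i; rewrite mem_filter; case: (boolP (i \in s1)) => // /sub ->.
Qed.

Lemma rsum_sub_le {I : eqType} (s1 s2 : seq I) F : uniq s1 -> uniq s2 -> {subset s1 <= s2} ->
  (forall i, i \in s2 -> 0 <= F i) -> \rsum_(i <- s1) F i <= \rsum_(i <- s2) F i.
Proof.
move=> u1 u2 sub H; rewrite (@split_sub _ s1 s2 F u1 u2 sub).
suff : 0 <= \big[Rplus/0]_(i <- s2 | i \notin s1) F i by lra.
rewrite -big_filter; apply: rsum_ge0 => i; rewrite mem_filter => /andP [_]; exact: H.
Qed.

Lemma rsum_compare {I : eqType} (s1 s2 s3 : seq I) c w :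
  uniq s1 -> uniq s2 -> uniq s3 -> {subset s1 <= s2} -> {subset s2 <= s3} ->
  (forall i, i \in s3 -> Rabs (c i) <= w i) ->
  Rabs (\rsum_(i <- s2) c i - \rsum_(i <- s1) c i) <= \rsum_(i <- s3) w i - \rsum_(i <- s1) w i.
Proof.
move=> u1 u2 u3 s12 s23 H.
have s13 : {subset s1 <= s3} by move=> i /s12 /s23.
rewrite (@split_sub _ s1 s2 c u1 u2 s12) (@split_sub _ s1 s3 w u1 u3 s13).
set A := \rsum_(i <- s1) c i; set B := \big[Rplus/0]_(i <- s2 | i \notin s1) c i.
set A' := \rsum_(i <- s1) w i; set B' := \big[Rplus/0]_(i <- s3 | i \notin s1) w i.
have -> : A + B - A = B by lra.
have -> : A' + B' - A' = B' by lra.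
rewrite /B /B'.
rewrite -(big_filter s2) -(big_filter s3); apply: Rle_trans (rsum_abs _ _) _.
apply: Rle_trans (@rsum_le _ _ _ w _) _.
  by move=> i; rewrite mem_filter => /andP [_ /s23]; apply: H.
apply: rsum_sub_le; rewrite ?filter_uniq //.
  by move=> i; rewrite !mem_filter => /andP [-> /s23].
move=> i; rewrite mem_filter => /andP [_ /H]; move: (Rabs_pos (c i)); lra.
Qed.

Local Open Scope nat_scope.
Definition Box L := [seq (a, b) | a <- iota 1 L, b <- iota 1 L].
Definition gg (p : nat * nat) := gcdn p.1 p.2.
Definition qq (p : nat * nat) := (p.1 %/ gg p) * (p.2 %/ gg p).
Definition Tl N := [seq p <- Box (N * N) | (gg p <= N) && (qq p <= N)].
Definition UDP m := UDPl [seq p ^ logn p m | p <- primes m].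

Lemma mem_Box L p : (p \in Box L) = (0 < p.1 <= L) && (0 < p.2 <= L).
Proof.
apply/allpairsP/idP => [[[a b] [/= Ha Hb ->]]|/andP [Ha Hb]].
  by move: Ha Hb; rewrite !mem_iota !add1n !ltnS /= => -> ->.
by exists p; rewrite !mem_iota !add1n !ltnS Ha Hb; case: p {Ha Hb}.
Qed.

Lemma uniq_Box L : uniq (Box L).
Proof. by apply: allpairs_uniq; rewrite ?iota_uniq // => [[a b] [a' b']] _ _ /= [-> ->]. Qed.

Lemma uniq_Tl N : uniq (Tl N).
Proof. by rewrite filter_uniq // uniq_Box. Qed.

Lemma Tl_sub N : {subset Tl N <= Box (N * N)}.
Proof. by move=> p; rewrite mem_filter => /andP []. Qed.

Lemma Box_sub_Tl L N : L * L <= N -> {subset Box L <= Tl N}.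
Proof.
move=> LN [a b]; rewrite mem_filter !mem_Box /= => /andP [/andP [a0 aL] /andP [b0 bL]].
have L0 : 0 < L by apply: leq_trans a0 aL.
have LLN : L <= N by apply: leq_trans LN; rewrite leq_pmulr.
have N0 : 0 < N by apply: leq_trans L0 LLN.
have NNN : N <= N * N by rewrite leq_pmulr.
have g0 : 0 < gcdn a b by rewrite gcdn_gt0 a0.
have ga : gcdn a b <= a by apply: dvdn_leq => //; exact: dvdn_gcdl.
rewrite /gg /qq /= a0 b0 /=.
apply/andP; split; first (apply/andP; split).
- exact: leq_trans ga (leq_trans aL LLN).
- apply: leq_trans (leq_mul (leq_div a _) (leq_div b _)) _.
  exact: leq_trans (leq_mul aL bL) LN.
apply/andP; split.
- exact: leq_trans aL (leq_trans LLN NNN).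
- exact: leq_trans bL (leq_trans LLN NNN).
Qed.

Lemma UDP_mem m d e : 0 < m -> ((d, e) \in UDP m) = (d * e == m) && coprime d e.
Proof. move=> m0; have [_ H] := @UDP_spec (primes m) m (primes_uniq m) m0 (fun _ => erefl); exact: H. Qed.

Lemma UDP_uniq m : 0 < m -> uniq (UDP m).
Proof. move=> m0; have [H _] := @UDP_spec (primes m) m (primes_uniq m) m0 (fun _ => erefl); exact: H. Qed.

Lemma Tl_split N k m : 0 < k <= N -> 0 < m <= N ->
  perm_eq [seq p <- [seq p <- Tl N | gg p == k] | qq p == m] [seq (k * r.1, k * r.2) | r <- UDP m].
Proof.
move=> /andP [k0 kN] /andP [m0 mN].
apply: uniq_perm.
- by do 2 apply: filter_uniq; exact: uniq_Tl.
- rewrite map_inj_in_uniq ?UDP_uniq // => [[a b] [a' b']] _ _ /= [/eqP].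
  by rewrite eqn_pmul2l // => /eqP -> /eqP; rewrite eqn_pmul2l // => /eqP ->.
move=> [a b]; rewrite !mem_filter mem_Box /qq /gg /=.
apply/idP/idP.
  move=> /andP [/eqP Hq /andP [/eqP Hg _]].
  rewrite Hg in Hq.
  have ka : k %| a by rewrite -Hg dvdn_gcdl.
  have kb : k %| b by rewrite -Hg dvdn_gcdr.
  apply/mapP; exists (a %/ k, b %/ k); last by rewrite /= !(mulnC k) !divnK.
  rewrite UDP_mem // Hq eqxx /= /coprime.
  by rewrite -(@eqn_pmul2l k) // muln_gcdr muln1 !(mulnC k) !divnK // Hg.
move=> /mapP [[d e] de [-> ->]] /=.
move: de; rewrite UDP_mem // => /andP [/eqP Hm C].
have d0 : 0 < d by move: m0; rewrite -Hm muln_gt0 => /andP [].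
have e0 : 0 < e by move: m0; rewrite -Hm muln_gt0 => /andP [].
have Hg : gcdn (k * d) (k * e) = k by rewrite -muln_gcdr (eqP C) muln1.
rewrite Hg !mulKn // Hm !eqxx kN mN /= !muln_gt0 k0 d0 e0 /=.
have dm : d <= m by rewrite -Hm leq_pmulr.
have em : e <= m by rewrite -Hm leq_pmull.
have dN := leq_trans dm mN; have eN := leq_trans em mN.
by rewrite !leq_mul.
Qed.
Local Open Scope R_scope.

Definition wt (x : R) (a : nat) := Rpower (INR a) (- x).
Definition cc (x y : R) (p : nat * nat) :=
  wt x p.1 * wt x p.2 * cos (y * ln (INR p.1) - y * ln (INR p.2)).
Definition ww (x : R) (p : nat * nat) := wt x p.1 * wt x p.2.

Lemma INR_pos (n : nat) : (0 < n)%N -> 0 < INR n.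
Proof. by move=> H; apply: lt_0_INR; apply/ltP. Qed.

Lemma wt_mul x a b : (0 < a)%N -> (0 < b)%N -> wt x (a * b) = wt x a * wt x b.
Proof. by move=> a0 b0; rewrite /wt mult_INR -Rpower_mult_distr //; apply: INR_pos. Qed.

Lemma wt_pos x a : 0 < wt x a.
Proof. rewrite /wt /Rpower; exact: exp_pos. Qed.

Lemma List_map_seq {A B : Type} (f : A -> B) (s : seq A) : List.map f s = map f s.
Proof. by elim: s => //= a s ->. Qed.

Lemma rhs_UDP x y m : (0 < m)%N ->
  rhs_term x y m = wt x m * \rsum_(r <- UDP m) cos (y * ln (INR r.1) - y * ln (INR r.2)).
Proof.
move=> m0; rewrite /rhs_term /omega /cos_prod /UDP.
have pos : all (fun q => 0 < q)%N [seq (p ^ logn p m)%N | p <- primes m].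
  apply/allP => q /mapP [p pm ->]; rewrite expn_gt0.
  by move: pm; rewrite mem_primes => /andP [/prime_gt0 ->].
have := @UDP_trig _ y pos 0.
rewrite size_map cos_0 Rmult_1_r -map_comp.
rewrite (eq_bigr (fun r : nat * nat => cos (y * ln (INR r.1) - y * ln (INR r.2)))); last first.
  by move=> r _; rewrite Rplus_0_l.
move=> ->; rewrite /wt Rpower_Ropp /Rdiv /comp List_map_seq; ring.
Qed.

Lemma Tl_sum x y N : \rsum_(p <- Tl N) cc x y p =
  (\rsum_(k <- iota 1 N) zeta_real_term (2 * x) k) * (\rsum_(m <- iota 1 N) rhs_term x y m).
Proof.
have Tlpos : forall p, p \in Tl N -> [/\ (0 < p.1)%N, (0 < gg p <= N)%N & (0 < qq p <= N)%N].
  move=> [a b]; rewrite mem_filter mem_Box /gg /qq /= => /andP [/andP [gN qN] /andP [/andP [a0 _] /andP [b0 _]]].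
  have g0 : (0 < gcdn a b)%N by rewrite gcdn_gt0 a0.
  split => //; first by rewrite g0.
  rewrite qN andbT muln_gt0 !divn_gt0 //.
  by rewrite (dvdn_leq a0 (dvdn_gcdl a b)) (dvdn_leq b0 (dvdn_gcdr a b)).
rewrite (@rsum_partition _ (Tl N) gg (iota 1 N) _ (iota_uniq 1 N)); last first.
  by move=> p /Tlpos [_ H _]; rewrite mem_iota add1n ltnS.
rewrite rsum_mul; apply: eq_big_seq => k; rewrite mem_iota add1n ltnS => kN.
rewrite -big_filter.
rewrite (@rsum_partition _ _ qq (iota 1 N) _ (iota_uniq 1 N)); last first.
  by move=> p; rewrite mem_filter => /andP [_ /Tlpos [_ _ H]]; rewrite mem_iota add1n ltnS.
apply: eq_big_seq => m; rewrite mem_iota add1n ltnS => mN.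
rewrite -big_filter (perm_big _ (@Tl_split N k m kN mN)) big_map.
have k0 : (0 < k)%N by case/andP: kN.
have m0 : (0 < m)%N by case/andP: mN.
rewrite rhs_UDP // !rsum_distrr; apply: eq_big_seq => [[d e]]; rewrite UDP_mem // => /andP [/eqP Hm _].
have d0 : (0 < d)%N by move: m0; rewrite -Hm muln_gt0 => /andP [].
have e0 : (0 < e)%N by move: m0; rewrite -Hm muln_gt0 => /andP [].
rewrite /cc /= !wt_mul // -Hm wt_mul // !ln_INR_mul //.
have -> : zeta_real_term (2 * x) k = wt x k * wt x k.
  by rewrite /zeta_real_term /wt -Rpower_plus; congr Rpower; ring.
have -> : y * (ln (INR k) + ln (INR d)) - y * (ln (INR k) + ln (INR e)) =
  y * ln (INR d) - y * ln (INR e) by ring.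
ring.
Qed.

Lemma sum_f_iota (F : nat -> R) N :
  sum_f_R0 (fun n => F (S n)) N = \rsum_(i <- iota 1 N.+1) F i.
Proof.
elim: N => [|N IH]; first by rewrite /= big_cons big_nil /=; ring.
rewrite [sum_f_R0 _ _]/= IH -(addn1 N.+1) iotaD big_cat big_seq1 add1n.
by rewrite addn1.
Qed.

Lemma rsum_const_le m len F c : (forall i, (m <= i)%N -> F i <= c) ->
  \rsum_(i <- iota m len) F i <= INR len * c.
Proof.
elim: len m => [|len IH] m H; first by rewrite /= big_nil; lra.
rewrite [iota _ _]/= big_cons S_INR; have := IH m.+1 (fun i hi => H i (ltnW hi)); have := H m (leqnn m).
set A := \rsum_(i <- _) _; lra.
Qed.

Lemma wt_anti s a b : 0 <= s -> (0 < a)%N -> (a <= b)%N -> wt s b <= wt s a.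
Proof.
move=> s0 a0 ab; rewrite /wt !Rpower_Ropp; apply: Rinv_le_contravar.
  rewrite /Rpower; exact: exp_pos.
apply: Rle_Rpower_l => //; split; first exact: INR_pos.
by apply: le_INR; apply/leP.
Qed.

Lemma INR_exp2 K : INR (2 ^ K) = 2 ^ K.
Proof. elim: K => [|K IH] //; rewrite expnS mult_INR IH /=; ring. Qed.

Lemma pseries_bound s : 1 < s -> forall K,
  \rsum_(i <- iota 1 (2 ^ K - 1)) wt s i <=
  (1 - Rpower 2 (1 - s) ^ K) / (1 - Rpower 2 (1 - s)).
Proof.
move=> s1; set r := Rpower 2 (1 - s).
have r0 : 0 < r by rewrite /r /Rpower; exact: exp_pos.
have r1 : r < 1.
  have h : 0 < ln 2 by rewrite -ln_1; apply: ln_increasing; lra.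
  rewrite /r /Rpower -{2}exp_0; apply: exp_increasing; nra.
elim => [|K IH].
  rewrite expn0 subnn big_nil /=; apply: Req_le; field; lra.
have t0 : (0 < 2 ^ K)%N by rewrite expn_gt0.
have Hsplit : (2 ^ K.+1 - 1 = (2 ^ K - 1) + 2 ^ K)%N.
  by rewrite expnS mul2n -addnn addnBAC // ?addnC.
rewrite Hsplit iotaD big_cat (subnKC t0).
have Hb : \rsum_(i <- iota (2 ^ K) (2 ^ K)) wt s i <= r ^ K.
  apply: Rle_trans (rsum_const_le _ _ _ (wt s (2 ^ K)) _) _.
    by move=> i hi; apply: wt_anti => //; lra.
  rewrite /wt INR_exp2 -(Rpower_pow K 2); last lra.
  rewrite Rpower_mult -Rpower_plus /r -(Rpower_pow K); last by rewrite /Rpower; exact: exp_pos.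
  rewrite Rpower_mult; apply: Req_le; congr Rpower; ring.
set A := \rsum_(i <- _) _ in IH *; set B := \rsum_(i <- _) _ in Hb *.
apply: Rle_trans (Rplus_le_compat _ _ _ _ IH Hb) _.
apply: Req_le; simpl; field; lra.
Qed.

Lemma rsum_prefix F a b : (a <= b)%N -> (forall i, 0 <= F i) ->
  \rsum_(i <- iota 1 a) F i <= \rsum_(i <- iota 1 b) F i.
Proof.
move=> ab H; rewrite -(subnKC ab) iotaD big_cat.
have := @rsum_ge0 _ (iota (1 + a) (b - a)) F (fun i _ => H i).
set A := \rsum_(i <- _) _; set B := \rsum_(i <- _) _; simpl; lra.
Qed.

Lemma pseries_cv s : 1 < s -> {l | Un_cv (sum_f_R0 (fun n => wt s (S n))) l}.
Proof.
move=> s1; apply: growing_cv.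
  by move=> n /=; have := wt_pos s n.+2; lra.
set r := Rpower 2 (1 - s).
have r0 : 0 < r by rewrite /r /Rpower; exact: exp_pos.
have r1 : r < 1.
  have h : 0 < ln 2 by rewrite -ln_1; apply: ln_increasing; lra.
  rewrite /r /Rpower -{2}exp_0; apply: exp_increasing; nra.
exists (1 / (1 - r)) => _ [n ->].
rewrite sum_f_iota.
apply: Rle_trans (@rsum_prefix _ _ (2 ^ n.+1 - 1) _ _) _.
- by rewrite leq_subRL ?expn_gt0 // add1n ltn_expl.
- by move=> i; have := wt_pos s i; lra.
apply: Rle_trans (pseries_bound s s1 n.+1) _.
rewrite -/r; apply: Rmult_le_compat_r.
  by apply: Rlt_le; apply: Rinv_0_lt_compat; lra.
have : 0 < r ^ n.+1 by apply: pow_lt.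
lra.
Qed.

Lemma sum_f_ext (f g : nat -> R) N : (forall i, f i = g i) -> sum_f_R0 f N = sum_f_R0 g N.
Proof. move=> H; elim: N => [|N IH] /=; by rewrite ?IH H. Qed.

Lemma abs_conv (u v : nat -> R) : (forall n, Rabs (u n) <= v n) ->
  {l | Un_cv (sum_f_R0 v) l} -> {l | Un_cv (sum_f_R0 u) l}.
Proof.
move=> H [lv Hv].
have [l1 H1] : {l | Un_cv (sum_f_R0 (fun n => u n + v n)) l}.
  apply: (Rseries_CV_comp _ (fun n => 2 * v n)).
    by move=> n; have := H n; split_Rabs; lra.
  exists (2 * lv); apply: (Un_cv_ext (fun N => 2 * sum_f_R0 v N)).
    by move=> N; rewrite scal_sum; apply: sum_f_ext => i; ring.
  by apply: CV_mult => //; move=> e e0; exists O => n _; rewrite /R_dist Rminus_diag Rabs_R0.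
exists (l1 - lv); apply: (Un_cv_ext (fun N => sum_f_R0 (fun n => u n + v n) N - sum_f_R0 v N)).
  by move=> N; rewrite plus_sum; ring.
exact: CV_minus.
Qed.

Lemma Un_cv_comp (f : nat -> R) (phi : nat -> nat) l :
  Un_cv (fun n => f (S n)) l -> (forall M, exists N0, forall n, (N0 <= n)%coq_nat -> (M < phi n)%coq_nat) ->
  Un_cv (fun n => f (phi n)) l.
Proof.
move=> Hf Hphi e e0; have [N1 HN1] := Hf e e0; have [N0 HN0] := Hphi N1.
exists N0 => n hn; have := HN0 n hn => hp.
have -> : phi n = S (Nat.pred (phi n)) by lia.
apply: HN1; lia.
Qed.

Lemma Un_cv_inv (u : nat -> R) l : l <> 0 -> Un_cv u l -> Un_cv (fun n => / u n) (/ l).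
Proof.
move=> l0 Hu.
have Hc : continuity_pt (/ id) l.
  apply: continuity_pt_inv => //; apply: derivable_continuous_pt; exact: derivable_pt_id.
exact: (continuity_seq _ _ _ Hc Hu).
Qed.

Lemma Box_cc x y L : \rsum_(p <- Box L) cc x y p =
  (\rsum_(a <- iota 1 L) zeta_re_term x y a) * (\rsum_(a <- iota 1 L) zeta_re_term x y a) +
  (\rsum_(a <- iota 1 L) zeta_im_term x y a) * (\rsum_(a <- iota 1 L) zeta_im_term x y a).
Proof.
rewrite /Box big_allpairs !rsum_mul -rsum_add; apply: eq_bigr => a _.
rewrite -rsum_add; apply: eq_bigr => b _.
rewrite /cc /zeta_re_term /zeta_im_term /wt /= cos_minus; ring.
Qed.

Lemma Box_ww x L : \rsum_(p <- Box L) ww x p =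
  (\rsum_(a <- iota 1 L) wt x a) * (\rsum_(a <- iota 1 L) wt x a).
Proof. by rewrite /Box big_allpairs rsum_mul. Qed.

Lemma cc_le x y p : Rabs (cc x y p) <= ww x p.
Proof.
rewrite /cc /ww Rabs_mult (Rabs_pos_eq (_ * _)); last first.
  by apply: Rlt_le; apply: Rmult_lt_0_compat; apply: wt_pos.
have := wt_pos x p.1; have := wt_pos x p.2; have := COS_bound (y * ln (INR p.1) - y * ln (INR p.2)).
move=> Hc h1 h2.
have : Rabs (cos (y * ln (INR p.1) - y * ln (INR p.2))) <= 1 by apply: Rabs_le; lra.
move=> H; have h12 : 0 < wt x p.1 * wt x p.2 by apply: Rmult_lt_0_compat.
set c := Rabs _ in H *; set w := wt x p.1 * wt x p.2 in h12 *; nra.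
Qed.

Lemma squeeze (u d e : nat -> R) l : Un_cv d l -> Un_cv e l -> (forall n, e n <= u n <= d n) -> Un_cv u l.
Proof.
move=> Hd He H eps e0; have [N1 H1] := Hd eps e0; have [N2 H2] := He eps e0.
exists (Nat.max N1 N2) => n hn.
have := H1 n ltac:(lia); have := H2 n ltac:(lia); have := H n.
rewrite /R_dist; split_Rabs; lra.
Qed.

Lemma sqrt_le N : (Nat.sqrt N * Nat.sqrt N <= N)%N.
Proof. apply/leP; case: (Nat.sqrt_spec N (Nat.le_0_l N)) => H _; exact: H. Qed.

Lemma sqrt_grows M : exists N0, forall n, (N0 <= n)%coq_nat -> (M < Nat.sqrt (S n))%coq_nat.
Proof.
exists (M.+1 * M.+1)%coq_nat => n hn.
have := Nat.sqrt_spec (S n) (Nat.le_0_l _); move: (Nat.sqrt (S n)) => s [h1 h2]; nia.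
Qed.

Theorem mainTheorem4 (x y : R) (hx : 1 < x) :
  exists re im z2x T : R,
    infinite_sum (fun n => zeta_re_term x y (S n)) re /\
    infinite_sum (fun n => zeta_im_term x y (S n)) im /\
    infinite_sum (fun n => zeta_real_term (2 * x) (S n)) z2x /\
    infinite_sum (fun n => rhs_term x y (S n)) T /\
    re * re + im * im = z2x * T.
Proof.
have [zx Hzx] := pseries_cv x hx.
have [z2 Hz2] := pseries_cv (2 * x) ltac:(lra).
have [re Hre] : {l | Un_cv (sum_f_R0 (fun n => zeta_re_term x y (S n))) l}.
  apply: (abs_conv _ (fun n => wt x (S n))); last by exists zx.
  move=> n; rewrite /zeta_re_term Rabs_mult Rabs_pos_eq; last exact: Rlt_le (wt_pos x _).
  have hw := wt_pos x n.+1; rewrite /wt in hw.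
  have hc : Rabs (cos (y * ln (INR n.+1))) <= 1 by apply: Rabs_le; apply: COS_bound.
  rewrite -[X in _ <= X]Rmult_1_r; apply: Rmult_le_compat_l => //; lra.
have [im Him] : {l | Un_cv (sum_f_R0 (fun n => zeta_im_term x y (S n))) l}.
  apply: (abs_conv _ (fun n => wt x (S n))); last by exists zx.
  move=> n; rewrite /zeta_im_term Rabs_Ropp Rabs_mult Rabs_pos_eq; last exact: Rlt_le (wt_pos x _).
  have hw := wt_pos x n.+1; rewrite /wt in hw.
  have hc : Rabs (sin (y * ln (INR n.+1))) <= 1 by apply: Rabs_le; apply: SIN_bound.
  rewrite -[X in _ <= X]Rmult_1_r; apply: Rmult_le_compat_l => //; lra.
set Re' := fun L => \rsum_(a <- iota 1 L) zeta_re_term x y a.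
set Im' := fun L => \rsum_(a <- iota 1 L) zeta_im_term x y a.
set A' := fun L => \rsum_(a <- iota 1 L) wt x a.
set Z' := fun L => \rsum_(a <- iota 1 L) zeta_real_term (2 * x) a.
set T' := fun L => \rsum_(a <- iota 1 L) rhs_term x y a.
have cvRe : Un_cv (fun n => Re' (S n)) re.
  by apply: (Un_cv_ext _ _ _ _ Hre) => n; rewrite sum_f_iota.
have cvIm : Un_cv (fun n => Im' (S n)) im.
  by apply: (Un_cv_ext _ _ _ _ Him) => n; rewrite sum_f_iota.
have cvA : Un_cv (fun n => A' (S n)) zx.
  by apply: (Un_cv_ext _ _ _ _ Hzx) => n; rewrite sum_f_iota.
have cvZ : Un_cv (fun n => Z' (S n)) z2.
  by apply: (Un_cv_ext _ _ _ _ Hz2) => n; rewrite sum_f_iota.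
set Q := re * re + im * im.
set P := fun L => Re' L * Re' L + Im' L * Im' L.
set W := fun L => A' L * A' L.
have cvP : Un_cv (fun n => P (S n)) Q by apply: CV_plus; apply: CV_mult.
have cvW : Un_cv (fun n => W (S n)) (zx * zx) by apply: CV_mult.
have cvPs : Un_cv (fun n => P (Nat.sqrt (S n))) Q by apply: Un_cv_comp cvP sqrt_grows.
have cvWs : Un_cv (fun n => W (Nat.sqrt (S n))) (zx * zx) by apply: Un_cv_comp cvW sqrt_grows.
have cvWb : Un_cv (fun n => W (S n * S n)%N) (zx * zx).
  apply: Un_cv_comp cvW _ => M; exists M => n hn; rewrite -multE; nia.
have bound : forall N, Rabs (Z' N * T' N - P (Nat.sqrt N)) <= W (N * N)%N - W (Nat.sqrt N).
  move=> N; rewrite /Z' /T' -Tl_sum /P -Box_cc /W -!Box_ww.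
  apply: rsum_compare; rewrite ?uniq_Box ?uniq_Tl //.
  - exact: Box_sub_Tl (sqrt_le N).
  - exact: Tl_sub.
  - by move=> p _; apply: cc_le.
have cvR : Un_cv (fun n => Z' (S n) * T' (S n)) Q.
  apply: (squeeze _ (fun n => P (Nat.sqrt (S n)) + (W (S n * S n)%N - W (Nat.sqrt (S n))))
                  (fun n => P (Nat.sqrt (S n)) - (W (S n * S n)%N - W (Nat.sqrt (S n))))).
  - rewrite -(Rplus_0_r Q); apply: CV_plus => //.
    by rewrite -(Rminus_diag (zx * zx)); apply: CV_minus.
  - rewrite -(Rminus_0_r Q); apply: CV_minus => //.
    by rewrite -(Rminus_diag (zx * zx)); apply: CV_minus.
  - move=> n; have := bound (S n); split_Rabs; lra.
have Zpos : forall n, 0 < Z' (S n).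
  move=> n; rewrite /Z' /= big_cons.
  have := wt_pos (2 * x) 1; have := @rsum_ge0 _ (iota 2 n) (zeta_real_term (2 * x)) (fun i _ => Rlt_le _ _ (wt_pos (2 * x) i)).
  rewrite /wt /zeta_real_term; set B := \rsum_(i <- _) _; simpl; lra.
have z2pos : 0 < z2.
  apply: Rlt_le_trans (Zpos O) _.
  apply: (growing_ineq (fun n => Z' (S n))) => // n.
  rewrite /Z' -!sum_f_iota /=; have := wt_pos (2 * x) n.+2; rewrite /wt /zeta_real_term; lra.
exists re, im, z2, (Q / z2); split; [exact: Hre|split; [exact: Him|split; [exact: Hz2|split]]].
  apply: (Un_cv_ext (fun n => T' (S n))); first by move=> n; rewrite sum_f_iota.
  apply: (Un_cv_ext (fun n => (Z' (S n) * T' (S n)) * / Z' (S n))).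
    by move=> n; have := Zpos n; move=> h; field; lra.
  by apply: CV_mult => //; apply: Un_cv_inv => //; lra.
rewrite /Q; field; lra.
Qed.
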